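(* Consider the hierarchical Gaussian $K$-armed bandit and the algorithm HierTS described in the context. Fix any round $t$, and let $\psi_t = (\psi_t(1), \dots, \psi_t(L_t))$ be the list of nodes on the path from the root $\psi_t(1) = 1$ to the action node $\psi_t(L_t) = A_t$. Then the marginal posterior variance of $\theta_{*, A_t}$ satisfies \[ \mathrm{Var}(\theta_{*, A_t} \mid H_t) = \sum_{i=1}^{L_t} \bigg(\prod_{j=i+1}^{L_t} \frac{\hat{\sigma}_{t, \psi_t(j)}^4}{\sigma_{0, \psi_t(j)}^4}\bigg) \hat{\sigma}_{t, \psi_t(i)}^2\,. \]
   Context: Tree and model. Let $\mathcal{T}$ be a rooted tree with node set $\mathcal{V}$, root labeled $1$, in which every internal node has at least $2$ children. For a node $i \neq 1$, $\mathsf{pa}(i)$ is its parent; $\mathsf{ch}(i)$ is the set of children of $i$. The leaves form the action set $\mathcal{A}$, $|\mathcal{A}| = K$. Node parameters $\theta_{*, i} \in \mathbb{R}$ are generated as $\theta_{*, 1} \sim \mathcal{N}(\mu_1, \sigma_{0,1}^2)$ and, for $i \neq 1$, $\theta_{*, i} \mid \theta_{*, \mathsf{pa}(i)} \sim \mathcal{N}(\theta_{*, \mathsf{pa}(i)}, \sigma_{0,i}^2)$, with known $\mu_1$ and $\sigma_{0,i} > 0$. In each round $t$ the agent takes $A_t \in \mathcal{A}$ and observes $Y_t \sim \mathcal{N}(\theta_{*, A_t}, \sigma^2)$ (independent noise, known $\sigma > 0$). The history is $H_t = (A_\ell, Y_\ell)_{\ell < t}$. HierTS samples $\Theta_t$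 exactly from the posterior of $(\theta_{*,i})_{i \in \mathcal{V}}$ given $H_t$ and takes $A_t = \arg\max_{a \in \mathcal{A}} \theta_{t,a}$. Conditional posterior variances. For a node $i \neq 1$, $\hat{\sigma}_{t,i}^2$ is the variance of $\theta_{*, i}$ conditioned on $H_t$ and on $\theta_{*, \mathsf{pa}(i)}$ (it does not depend on the value of the parent); for the root, $\hat{\sigma}_{t,1}^2 = \mathrm{Var}(\theta_{*,1} \mid H_t)$. Explicitly, with $\mathcal{S}_{t,a} = \{\ell < t : A_\ell = a\}$: for an action node $a$, $\hat{\sigma}_{t,a}^{-2} = \sigma_{0,a}^{-2} + |\mathcal{S}_{t,a}| \sigma^{-2}$; for a non-action node $i$, $\hat{\sigma}_{t,i}^{-2} = \sigma_{0,i}^{-2} + \sum_{j \in \mathsf{ch}(i)} \tilde{\sigma}_{t,j}^{-2}$, where recursively $\tilde{\sigma}_{t,j}^{2} = \sigma_{0,j}^2 + \sigma^2/|\mathcal{S}_{t,j}|$ for an action node $j$ (with $\tilde{\sigma}_{t,j}^{-2} = 0$ if $|\mathcal{S}_{t,j}| = 0$) and $\tilde{\sigma}_{t,j}^{2} = \sigma_{0,j}^2 + \big(\sum_{k \in \mathsf{ch}(j)} \tilde{\sigma}_{t,k}^{-2}\big)^{-1}$ for a non-action node $j$. *)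

(* Defs.v *)
From mathcomp Require Import all_boot all_order all_algebra.
Set Implicit Arguments. Unset Strict Implicit. Unset Printing Implicit Defensive.
Import Order.TTheory GRing.Theory Num.Theory.
Local Open Scope ring_scope.

Section Tree.
Variables (V : finType) (root : V) (pa : V -> V).

(* children of i (the root is its own parent by convention, never a child) *)
Definition children (i : V) : seq V :=
  [seq j <- enum V | (pa j == i) && (j != root)].

(* leaves = action nodes *)
Definition is_leaf (i : V) : bool := nilp (children i).

Definition is_rooted_tree : Prop :=
  [/\ pa root = root,
      (forall i, exists k, iter k pa i = root) &
      (forall i, ~~ is_leaf i -> (1 < size (children i))%N)].

(* k is an ancestor of i (or i itself) *)
Definition ancb (k i : V) : bool := [exists n : 'I_#|V|, iter n pa i == k].

Definition depth (i : V) : nat :=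
  find (fun n => iter n pa i == root) (iota 0 #|V|).

(* psi = [root = psi(1); ...; psi(L) = i], the path from the root to i *)
Definition path_from_root (i : V) : seq V := rev (traject pa i (depth i).+1).

End Tree.

Section Model.
Variables (V : finType) (root : V) (pa : V -> V).
Variables (R : realFieldType) (sigma0 : V -> R) (sigma : R).
(* acts = (A_1, ..., A_{t-1}) : the actions of the history H_t *)
Variable acts : seq V.

Definition nobs (a : V) : nat := count_mem a acts.

(* sigma_tilde^{-2} computed from p = (data precision of the subtree):
   sigma_tilde^2 = sigma0^2 + p^{-1}, with sigma_tilde^{-2} = 0 if p = 0 *)
Definition tilde_inv (p s0 : R) : R := if p == 0 then 0 else (s0 ^+ 2 + p^-1)^-1.

Fixpoint dprec_fuel (fuel : nat) (i : V) : R :=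
  match fuel with
  | 0 => 0
  | f.+1 =>
    if is_leaf root pa i then (nobs i)%:R / sigma ^+ 2
    else \sum_(j <- children root pa i) tilde_inv (dprec_fuel f j) (sigma0 j)
  end.

Definition dprec (i : V) : R := dprec_fuel #|V| i.

Definition hat_var (i : V) : R := ((sigma0 i ^+ 2)^-1 + dprec i)^-1.

(* prior covariance Cov(theta_i, theta_j) = sum over common ancestors k of
   sigma_{0,k}^2 (from theta_i = theta_1 + sum of independent increments) *)
Definition prior_cov (i j : V) : R :=
  \sum_(k | ancb pa k i && ancb pa k j) sigma0 k ^+ 2.

Definition obs_cov : 'M[R]_(size acts) :=
  \matrix_(l, m) (prior_cov (nth root acts l) (nth root acts m)
                  + (l == m)%:R * sigma ^+ 2).

Definition cross_cov (a : V) : 'cV[R]_(size acts) :=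
  \col_l prior_cov a (nth root acts l).

(* Var(theta_a | H_t): Gaussian conditioning (Schur complement) *)
Definition post_var (a : V) : R :=
  prior_cov a a - ((cross_cov a)^T *m invmx obs_cov *m cross_cov a) ord0 ord0.

End Model.

(* Main.v *)
Require Import Defs.
From mathcomp Require Import all_boot all_order all_algebra zify ring lra.
Set Implicit Arguments. Unset Strict Implicit. Unset Printing Implicit Defensive.
Import Order.TTheory GRing.Theory Num.Theory.

Section TreeLemmas.
Variables (V : finType) (root : V) (pa : V -> V).
Hypothesis Ht : is_rooted_tree root pa.

Lemma pa_root : pa root = root.
Proof. by case: Ht. Qed.

Lemma iter_root n : iter n pa root = root.
Proof. by elim: n => //= n ->; rewrite pa_root. Qed.

Lemma reach_bound i : exists2 n, n < #|V| & iter n pa i = root.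
Proof.
case: Ht => _ Hr _.
have ex : exists n, iter n pa i == root by case: (Hr i) => k Hk; exists k; apply/eqP.
case: (ex_minnP ex) => k /eqP Hk Hmin.
exists k => //.
have U : uniq (traject pa i k.+1).
  rewrite looping_uniq; apply/negP => /trajectP [j Hj Ej].
  have := Hmin j; rewrite -Ej Hk eqxx => /(_ isT); rewrite leqNgt Hj //.
have := card_uniqP U; rewrite size_traject => <-.
exact: max_card.
Qed.

Lemma depth_spec i : [/\ depth root pa i < #|V|, iter (depth root pa i) pa i = root &
   forall n, n < depth root pa i -> iter n pa i != root].
Proof.
case: (reach_bound i) => n Hn Hi.
have Hh : has (fun n => iter n pa i == root) (iota 0 #|V|).
  by apply/hasP; exists n; [rewrite mem_iota | apply/eqP].
have Hlt : depth root pa i < #|V| by rewrite /depth -{2}(size_iota 0 #|V|) -has_find.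
split => //.
  have := nth_find 0 Hh; rewrite -/(depth root pa i) nth_iota // add0n => /eqP //.
move=> m Hm; have := before_find 0 Hm; rewrite nth_iota ?add0n ?(ltn_trans Hm) // => ->.
done.
Qed.

Lemma depth_lt i : depth root pa i < #|V|.
Proof. by case: (depth_spec i). Qed.
Lemma iter_depth i : iter (depth root pa i) pa i = root.
Proof. by case: (depth_spec i). Qed.
Lemma depth_min i n : iter n pa i = root -> depth root pa i <= n.
Proof.
move=> H; rewrite leqNgt; apply/negP => Hn.
by case: (depth_spec i) => _ _ /(_ _ Hn); rewrite H eqxx.
Qed.

Lemma depth_root : depth root pa root = 0.
Proof. by apply/eqP; rewrite -leqn0; apply: depth_min. Qed.

Lemma depth0 i : depth root pa i = 0 -> i = root.
Proof. by move=> H; have := iter_depth i; rewrite H. Qed.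

Lemma depth_pa i : i != root -> depth root pa i = (depth root pa (pa i)).+1.
Proof.
move=> Hi.
have Hd : 0 < depth root pa i.
  by rewrite lt0n; apply/negP => /eqP /depth0 E; rewrite E eqxx in Hi.
apply/eqP; rewrite eqn_leq; apply/andP; split.
  by apply: depth_min; rewrite iterSr iter_depth.
rewrite -(prednK Hd) ltnS; apply: depth_min.
by rewrite -iterSr prednK // iter_depth.
Qed.

Lemma depth_iter n i : n <= depth root pa i -> depth root pa (iter n pa i) = depth root pa i - n.
Proof.
elim: n => [|n IH] Hn; first by rewrite subn0.
rewrite iterS.
have Hne : iter n pa i != root.
  by case: (depth_spec i) => _ _; apply.
have := depth_pa Hne; rewrite IH ?(ltnW Hn) // => E.
by rewrite subnS E.
Qed.

Lemma iter_ge n i : depth root pa i <= n -> iter n pa i = root.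
Proof. by move=> H; rewrite -(subnK H) iterD iter_depth iter_root. Qed.

Lemma ancbP k i : reflect (exists n, iter n pa i = k) (ancb pa k i).
Proof.
apply: (iffP existsP) => [[n /eqP <-]|[n Hn]]; first by exists n.
case: (leqP n (depth root pa i)) => H.
  exists (Ordinal (leq_ltn_trans H (depth_lt i))); exact/eqP.
exists (Ordinal (depth_lt i)) => /=; apply/eqP.
by rewrite iter_depth -Hn iter_ge // ltnW.
Qed.

Lemma ancb_refl i : ancb pa i i.
Proof. by apply/ancbP; exists 0. Qed.

Lemma ancb_root i : ancb pa root i.
Proof. by apply/ancbP; exists (depth root pa i); rewrite iter_depth. Qed.

Lemma ancb_trans k j i : ancb pa k j -> ancb pa j i -> ancb pa k i.
Proof.
move=> /ancbP [n <-] /ancbP [m <-]; apply/ancbP; exists (n + m); by rewrite iterD.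
Qed.

Lemma ancb_pa i : ancb pa (pa i) i.
Proof. by apply/ancbP; exists 1. Qed.

Lemma ancb_bound k i : ancb pa k i -> exists2 n, n <= depth root pa i & iter n pa i = k.
Proof.
move=> /ancbP [n Hn]; case: (leqP n (depth root pa i)) => H; first by exists n.
exists (depth root pa i) => //; by rewrite iter_depth -Hn iter_ge // ltnW.
Qed.

Lemma ancb_depth k i : ancb pa k i -> k = iter (depth root pa i - depth root pa k) pa i.
Proof. by move=> /ancb_bound [n Hn <-]; rewrite depth_iter // subKn. Qed.

Lemma ancb_le k i : ancb pa k i -> depth root pa k <= depth root pa i.
Proof. by move=> /ancb_bound [n Hn <-]; rewrite depth_iter // leq_subr. Qed.

Lemma ancb_eq_depth k k' i : ancb pa k i -> ancb pa k' i ->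
  depth root pa k = depth root pa k' -> k = k'.
Proof.
by move=> /ancb_depth {2}-> /ancb_depth {2}-> ->.
Qed.

Lemma ancb_eq k i : ancb pa k i -> depth root pa k = depth root pa i -> k = i.
Proof. by move=> H E; apply: (ancb_eq_depth H (ancb_refl i)). Qed.

Lemma ancb_paE k i : i != root -> ancb pa k i = (k == i) || ancb pa k (pa i).
Proof.
move=> Hi; apply/idP/idP.
  move=> /ancbP [[|n] <-]; first by rewrite eqxx.
  by rewrite iterSr; apply/orP; right; apply/ancbP; exists n.
case/orP => [/eqP ->|H]; first exact: ancb_refl.
exact: ancb_trans H (ancb_pa i).
Qed.

Lemma ancb_rootE k : ancb pa k root = (k == root).
Proof.
apply/idP/eqP => [/ancbP [n <-]|->]; [exact: iter_root | exact: ancb_refl].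
Qed.

Lemma not_ancb_pa i : i != root -> ~~ ancb pa i (pa i).
Proof.
move=> Hi; apply/negP => /ancb_le; rewrite (depth_pa Hi) ltnn //.
Qed.

Lemma mem_children c k : (c \in children root pa k) = (pa c == k) && (c != root).
Proof. by rewrite mem_filter mem_enum andbT. Qed.

Lemma uniq_children k : uniq (children root pa k).
Proof. by rewrite filter_uniq // enum_uniq. Qed.

Lemma depth_child c k : c \in children root pa k -> depth root pa c = (depth root pa k).+1.
Proof. by rewrite mem_children => /andP [/eqP <- Hc]; rewrite depth_pa. Qed.

Lemma tree_ind (P : V -> Prop) :
  (forall v, (forall c, c \in children root pa v -> P c) -> P v) -> forall v, P v.
Proof.
move=> H.
suff : forall m v, #|V| - depth root pa v <= m -> P v by move=> S v; exact: (S _ v (leqnn _)).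
elim => [|m IH] v Hv.
  by have := depth_lt v; rewrite -subn_gt0 lt0n -leqn0 Hv.
apply: H => c Hc; apply: IH; rewrite (depth_child Hc) subnS.
by rewrite -ltnS prednK // subn_gt0 depth_lt.
Qed.

Lemma ancb_split (R : nzRingType) k u :
  (((ancb pa k u)%:R : R) = ((u == k)%:R + \sum_(c <- children root pa k) (ancb pa c u)%:R))%R.
Proof.
have child_nanc : forall c, c \in children root pa k -> ancb pa c u -> ancb pa k u.
  move=> c; rewrite mem_children => /andP [/eqP <- _] H; exact: ancb_trans (ancb_pa c) H.
case: (eqVneq u k) => [->|Hne].
  rewrite ancb_refl big1_seq ?addr0 // => c /andP [_ Hc].
  case Hac: (ancb pa c k) => //.
  have := ancb_le Hac; rewrite (depth_child Hc) ltnn //.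
case Hku: (ancb pa k u); last first.
  rewrite add0r big1_seq // => c /andP [_ Hc].
  case Hac: (ancb pa c u) => //; by rewrite (child_nanc c Hc Hac) in Hku.
rewrite add0r.
have Hlt : depth root pa k < depth root pa u.
  rewrite ltn_neqAle ancb_le // andbT; apply/negP => /eqP E.
  by rewrite (ancb_eq Hku E) eqxx in Hne.
set c0 := iter (depth root pa u - depth root pa k).-1 pa u.
have Hc0a : ancb pa c0 u by apply/ancbP; exists (depth root pa u - depth root pa k).-1.
have Hdc0 : depth root pa c0 = (depth root pa k).+1.
  rewrite /c0 depth_iter; last by rewrite (leq_trans (leq_pred _)) // leq_subr.
  move: Hlt; clear; lia.
have Hc0 : c0 \in children root pa k.
  rewrite mem_children; apply/andP; split.
    apply/eqP; apply: (ancb_eq_depth _ Hku).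
      exact: ancb_trans (ancb_pa c0) Hc0a.
    have Hne0 : c0 != root by apply/negP => /eqP E; rewrite E depth_root in Hdc0.
    by have := depth_pa Hne0; rewrite Hdc0 => -[->].
  by apply/negP => /eqP E; rewrite E depth_root in Hdc0.
rewrite (bigD1_seq c0) //= ?uniq_children // Hc0a big1_seq ?addr0 //.
move=> c /andP [Hcc Hc].
case Hcu: (ancb pa c u) => //.
have E : c = c0 by apply: (ancb_eq_depth Hcu Hc0a); rewrite Hdc0 (depth_child Hc).
by rewrite E eqxx in Hcc.
Qed.

Lemma path_pa v : v != root ->
  path_from_root root pa v = rcons (path_from_root root pa (pa v)) v.
Proof. by move=> Hv; rewrite /path_from_root (depth_pa Hv) /= rev_cons. Qed.

Lemma path_root : path_from_root root pa root = [:: root].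
Proof. by rewrite /path_from_root depth_root. Qed.

End TreeLemmas.


Section Model.
Variables (V : finType) (root : V) (pa : V -> V).
Variables (R : realFieldType) (sigma0 : V -> R) (sigma : R) (acts : seq V) (a : V).
Hypothesis Ht : is_rooted_tree root pa.
Hypothesis Hs0 : forall i, (0 < sigma0 i)%R.
Hypothesis Hs : (0 < sigma)%R.
Hypothesis Hacts : all (is_leaf root pa) acts.
Hypothesis Ha : is_leaf root pa a.

Local Open Scope ring_scope.

Let D := dprec root pa sigma0 sigma acts.
Let h := hat_var root pa sigma0 sigma acts.
Let s := sigma ^+ 2.
Let q v := sigma0 v ^+ 2.
Let tau v := tilde_inv (D v) (sigma0 v).

Lemma fuel_stable f i : (#|V| <= depth root pa i + f)%N ->
  dprec_fuel root pa sigma0 sigma acts f i = dprec_fuel root pa sigma0 sigma acts f.+1 i.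
Proof.
elim: f i => [|f IH] i Hi.
  by have := depth_lt Ht i; rewrite ltnNge -(addn0 (depth _ _ _)) Hi.
rewrite [LHS]/= [RHS]/=; case: ifP => // _.
apply: eq_big_seq => c Hc; congr tilde_inv; apply: IH.
by rewrite (depth_child Ht Hc) addSn -addnS.
Qed.

Lemma dprecE i : D i = if is_leaf root pa i then (nobs acts i)%:R / s
  else \sum_(c <- children root pa i) tau c.
Proof.
rewrite /D /dprec.
have : (0 < #|V|)%N by apply: (leq_ltn_trans _ (depth_lt Ht i)).
case E: #|V| => [//|n] _ /=; case: ifP => // _.
apply: eq_big_seq => c Hc; rewrite /tau /D /dprec E; congr tilde_inv.
apply: fuel_stable; rewrite E (depth_child Ht Hc) addSn -addnS; exact: leq_addl.
Qed.

Lemma q_gt0 v : 0 < q v.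
Proof. by rewrite /q exprn_gt0. Qed.
Lemma s_gt0 : 0 < s.
Proof. by rewrite /s exprn_gt0. Qed.

Lemma tilde_inv_ge0 (p s0 : R) : 0 <= p -> 0 <= tilde_inv p s0.
Proof.
rewrite /tilde_inv; case: eqP => // _ Hp.
by rewrite invr_ge0 addr_ge0 ?sqr_ge0 ?invr_ge0.
Qed.

Lemma D_ge0 v : 0 <= D v.
Proof.
elim/(tree_ind Ht): v => v IH; rewrite dprecE; case: ifP => _.
  by rewrite divr_ge0 ?ler0n ?ltW ?s_gt0.
rewrite big_seq sumr_ge0 // => c Hc; apply: tilde_inv_ge0; exact: IH.
Qed.

Let al v := h v / q v.

Lemma onepqD_gt0 v : 0 < 1 + q v * D v.
Proof. by rewrite ltr_wpDr ?mulr_ge0 ?D_ge0 ?ltW ?q_gt0. Qed.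

Lemma alE v : al v = (1 + q v * D v)^-1.
Proof.
rewrite /al /h /hat_var -/(D v) -/(q v).
have := q_gt0 v; have := onepqD_gt0 v.
move: (q v) (D v) => Q d H1 H2.
by field; rewrite !gt_eqF.
Qed.

Lemma hE v : h v = q v * al v.
Proof. by rewrite /al mulrC divfK // gt_eqF ?q_gt0. Qed.

Lemma tauE v : tau v = D v * al v.
Proof.
rewrite /tau /tilde_inv alE; case: eqP => [->|/eqP Hd]; first by rewrite mul0r.
have H1 := onepqD_gt0 v; have H2 := q_gt0 v.
rewrite /q in H1 H2 *.
by field; rewrite Hd gt_eqF.
Qed.

Let g v := h v ^+ 2 / sigma0 v ^+ 4.

Definition Vp v := \sum_(i < size (path_from_root root pa v))
  (\prod_(i.+1 <= j < size (path_from_root root pa v)) g (nth root (path_from_root root pa v) j))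
  * h (nth root (path_from_root root pa v) i).

Lemma gE v : g v = al v ^+ 2.
Proof. by rewrite /g /al /q expr_div_n -exprM. Qed.

Lemma Vp_root : Vp root = h root.
Proof. by rewrite /Vp (path_root Ht) big_ord1 big_geq // mul1r. Qed.

Lemma Vp_pa v : v != root -> Vp v = h v + al v ^+ 2 * Vp (pa v).
Proof.
move=> Hv; rewrite /Vp (path_pa Ht Hv) size_rcons big_ord_recr /=.
rewrite big_geq // mul1r nth_rcons ltnn eqxx addrC; congr (_ + _).
rewrite mulr_sumr; apply: eq_bigr => i _.
rewrite big_nat_recr //= nth_rcons ltnn eqxx gE.
rewrite [X in h X]nth_rcons ltn_ord.
under eq_big_nat => j /andP [_ Hj] do rewrite nth_rcons Hj.
ring.
Qed.

Definition beta v := \prod_(k | ancb pa k a && ~~ ancb pa k v) al k.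

Fixpoint xf n v := match n with
  | 0 => beta v * Vp v
  | n.+1 => if ancb pa v a then beta v * Vp v else al v * xf n (pa v) end.

Definition x v := xf (depth root pa v) v.

Lemma x_on v : ancb pa v a -> x v = beta v * Vp v.
Proof. by move=> H; rewrite /x; case: (depth root pa v) => //= n; rewrite H. Qed.

Lemma off_nroot v : ~~ ancb pa v a -> v != root.
Proof. by move=> H; apply/negP => /eqP E; rewrite E (ancb_root Ht) in H. Qed.

Lemma x_off v : ~~ ancb pa v a -> x v = al v * x (pa v).
Proof.
move=> H; have Hv := off_nroot H.
by rewrite /x (depth_pa Ht Hv) /= (negbTE H).
Qed.

Lemma beta_a : beta a = 1.
Proof. by rewrite /beta big_pred0 // => k; rewrite andbN. Qed.

Lemma beta_pa v : v != root -> ancb pa v a -> beta (pa v) = al v * beta v.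
Proof.
move=> Hv Hva; rewrite /beta (bigD1 v) /=; last by rewrite Hva (not_ancb_pa Ht Hv).
congr (_ * _); apply: eq_bigl => k; rewrite (ancb_paE Ht k Hv).
by case: (ancb pa k a); case: eqP; case: (ancb pa k (pa v)).
Qed.

Definition Wsum k := \sum_(u <- acts) (ancb pa k u)%:R * x u.

Lemma sum_count (f : V -> R) k (r : seq V) :
  \sum_(u <- r) (u == k)%:R * f u = (count_mem k r)%:R * f k.
Proof.
elim: r => [|y r IH]; first by rewrite big_nil mul0r.
rewrite big_cons IH /= natrD mulrDl; congr (_ + _).
by case: eqP => [->|_]; rewrite ?mul1r ?mul0r.
Qed.

Lemma Wsum_rec k : Wsum k = (nobs acts k)%:R * x k + \sum_(c <- children root pa k) Wsum c.
Proof.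
rewrite /Wsum; under eq_bigr => u _ do rewrite (ancb_split Ht R k u) mulrDl mulr_suml.
rewrite big_split /= sum_count; congr (_ + _).
exact: exchange_big.
Qed.

Lemma nobs_int k : ~~ is_leaf root pa k -> nobs acts k = 0%N.
Proof.
move=> H; apply/count_memPn; apply/negP => Hk.
by have := allP Hacts k Hk; rewrite (negbTE H).
Qed.

Lemma leaf_children k : is_leaf root pa k -> children root pa k = [::].
Proof. by move/nilP. Qed.

Lemma M1 v : ~~ ancb pa v a -> Wsum v / s = tau v * x (pa v).
Proof.
elim/(tree_ind Ht): v => v IH Hv.
rewrite Wsum_rec tauE; case Hl: (is_leaf root pa v).
  rewrite (leaf_children Hl) big_nil addr0 (x_off Hv) dprecE Hl.
  by rewrite mulrAC !mulrA.
rewrite nobs_int ?Hl // mul0r add0r dprecE Hl mulr_suml -mulrA mulr_suml.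
apply: eq_big_seq => c Hc.
have Hpc : pa c = v by move: Hc; rewrite mem_children => /andP [/eqP].
have Hca : ~~ ancb pa c a.
  apply/negP => Hca; move: Hv; rewrite -Hpc (ancb_trans Ht (ancb_pa Ht c) Hca) //.
by rewrite IH // Hpc (x_off Hv).
Qed.

Definition Vq v := if v == root then 0 else Vp (pa v).
Definition xprev v := if v == root then 0 else x (pa v).

Lemma Vp_Vq v : Vp v = h v + al v ^+ 2 * Vq v.
Proof.
rewrite /Vq; case: eqP => [->|/eqP Hv]; first by rewrite Vp_root mulr0 addr0.
exact: Vp_pa.
Qed.

Lemma xprev_on v : ancb pa v a -> xprev v = al v * beta v * Vq v.
Proof.
move=> Hva; rewrite /xprev /Vq; case: eqP => [_|/eqP Hv]; first by rewrite mulr0.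
have Hpa : ancb pa (pa v) a by exact: (ancb_trans Ht (ancb_pa Ht v) Hva).
by rewrite x_on // (beta_pa Hv Hva).
Qed.

Lemma q_neq0 v : q v != 0.
Proof. by rewrite gt_eqF ?q_gt0. Qed.
Lemma s_neq0 : s != 0.
Proof. by rewrite gt_eqF ?s_gt0. Qed.
Lemma den_neq0 v : 1 + q v * D v != 0.
Proof. by rewrite gt_eqF ?onepqD_gt0. Qed.

Lemma M3 v : ancb pa v a -> Wsum v / s = 1 - (x v - xprev v) / q v.
Proof.
elim/(tree_ind Ht): v => v IH Hva.
case: (eqVneq v a) => [->|Hne].
  rewrite Wsum_rec (leaf_children Ha) big_nil addr0.
  have -> : (nobs acts a)%:R * x a / s = D a * x a by rewrite dprecE Ha mulrAC.
  rewrite (xprev_on (ancb_refl Ht a)) (x_on (ancb_refl Ht a)) beta_a Vp_Vq hE !alE.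
  have := q_neq0 a; have := den_neq0 a.
  move: (q a) (D a) (Vq a) => Q d W H1 H2.
  by field; rewrite H1 H2.
have [c Hc Hca] : exists2 c, c \in children root pa v & ancb pa c a.
  apply/hasP; apply/negPn/negP => Hn.
  have := ancb_split Ht R v a; rewrite Hva eq_sym (negbTE Hne) add0r big1_seq.
    by move/eqP; rewrite oner_eq0.
  by move=> c /andP [_ Hc]; rewrite (negbTE (hasPn Hn c Hc)).
have Hl : ~~ is_leaf root pa v by apply/nilP => E; rewrite E in Hc.
have Hpc : pa c = v by move: Hc; rewrite mem_children => /andP [/eqP].
have Hcr : c != root by move: Hc; rewrite mem_children => /andP [].
have Hoth : forall c', c' \in children root pa v -> c' != c -> ~~ ancb pa c' a.
  move=> c' Hc' Hne'; apply/negP => Hc'a; move/eqP: Hne'; apply.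
  by apply: (ancb_eq_depth Ht Hc'a Hca); rewrite (depth_child Ht Hc) (depth_child Ht Hc').
have HD : D v = tau c + \sum_(c' <- children root pa v | c' != c) tau c'.
  by rewrite dprecE (negbTE Hl) (bigD1_seq c) ?uniq_children.
rewrite Wsum_rec nobs_int // mul0r add0r (bigD1_seq c) ?uniq_children //=.
rewrite mulrDl (IH c Hc Hca) mulr_suml.
rewrite big_seq_cond (eq_bigr (fun c' => tau c' * x v)); last first.
  move=> c' /andP [Hc' Hne'].
  rewrite M1 ?Hoth //; by move: Hc'; rewrite mem_children => /andP [/eqP ->].
rewrite -big_seq_cond -mulr_suml.
have -> : \sum_(i <- children root pa v | i != c) tau i = D v - tau c by rewrite HD addrAC subrr add0r.
have -> : xprev c = x v by rewrite /xprev (negbTE Hcr) Hpc.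
rewrite (xprev_on Hva) (x_on Hva) (x_on Hca) (Vp_pa Hcr) Hpc.
rewrite -Hpc (beta_pa Hcr) ?Hpc // Vp_Vq tauE !hE !alE.
have := q_neq0 v; have := den_neq0 v; have := q_neq0 c; have := den_neq0 c.
move: (q v) (D v) (q c) (D c) (Vq v) (beta c) => Qv dv Qc dc W b H1 H2 H3 H4.
by field; rewrite H1 H2 H3 H4.
Qed.

Lemma step v : v != root -> x v - x (pa v) = q v * ((ancb pa v a)%:R - Wsum v / s).
Proof.
move=> Hv; case Hva: (ancb pa v a).
  have := M3 Hva; rewrite /xprev (negbTE Hv) => ->; rewrite mulr1n.
  by have := q_neq0 v; move: (q v) => Q HQ; field.
rewrite M1 ?Hva // (x_off (negbT Hva)) tauE alE mulr0n.
by have := q_neq0 v; have := den_neq0 v; move: (q v) (D v) => Q d H1 H2; field; rewrite H1.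
Qed.

Lemma Gsum v : x v = \sum_(k | ancb pa k v) q k * ((ancb pa k a)%:R - Wsum k / s).
Proof.
suff : forall n v, depth root pa v = n -> x v = \sum_(k | ancb pa k v) q k * ((ancb pa k a)%:R - Wsum k / s) by move=> S; exact: S.
elim => [|n IH] {}v Hd.
  have -> := depth0 Ht Hd.
  rewrite (eq_bigl (pred1 root)) => [|k]; last by rewrite (ancb_rootE Ht).
  rewrite big_pred1_eq (ancb_root Ht) mulr1n.
  have := M3 (ancb_root Ht a); rewrite /xprev eqxx subr0 => ->.
  by have := q_neq0 root; move: (q root) => Q HQ; field.
have Hv : v != root by apply/negP => /eqP E; rewrite E (depth_root Ht) in Hd.
rewrite (bigD1 v) ?(ancb_refl Ht) //=.
rewrite (eq_bigl (fun k => ancb pa k (pa v))) => [|k]; last first.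
  rewrite (ancb_paE Ht k Hv); case: eqP => [->|_]; rewrite ?andbT //=; by rewrite (negbTE (not_ancb_pa Ht Hv)).
rewrite -IH; last by move: Hd; rewrite (depth_pa Ht Hv) => -[].
by rewrite -step // subrK.
Qed.

Lemma pcE i j : prior_cov pa sigma0 i j = \sum_(k | ancb pa k i) q k * (ancb pa k j)%:R.
Proof.
rewrite /prior_cov big_mkcondr /=; apply: eq_bigr => k _.
by case: (ancb pa k j); rewrite ?mulr1 ?mulr0.
Qed.

Lemma pc_sym i j : prior_cov pa sigma0 i j = prior_cov pa sigma0 j i.
Proof. by rewrite /prior_cov; apply: eq_bigl => k; rewrite andbC. Qed.

Lemma M4 v : x v + (\sum_(u <- acts) prior_cov pa sigma0 v u * x u) / s = prior_cov pa sigma0 v a.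
Proof.
have -> : \sum_(u <- acts) prior_cov pa sigma0 v u * x u = \sum_(k | ancb pa k v) q k * Wsum k.
  under eq_bigr => u _ do rewrite pcE mulr_suml.
  rewrite exchange_big /=; apply: eq_bigr => k _.
  by rewrite /Wsum mulr_sumr; apply: eq_bigr => u _; rewrite mulrA.
rewrite Gsum pcE mulr_suml -big_split /=; apply: eq_bigr => k _.
by rewrite mulrBr -mulrA subrK.
Qed.

Let Sg := obs_cov root pa sigma0 sigma acts.
Let kk := cross_cov root pa sigma0 acts a.
Let y : 'cV[R]_(size acts) := \col_l x (nth root acts l).

Lemma sumnth (F : V -> R) : \sum_(l < size acts) F (nth root acts l) = \sum_(u <- acts) F u.
Proof. by rewrite (big_nth root) big_mkord. Qed.

Lemma Sy : Sg *m y = s *: kk.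
Proof.
apply/matrixP => l j; rewrite !mxE.
under eq_bigr => m _ do rewrite !mxE mulrDl.
rewrite big_split /=.
rewrite (sumnth (fun u => prior_cov pa sigma0 (nth root acts l) u * x u)).
rewrite [X in _ + X](bigD1 l) //= eqxx mul1r [X in _ + (_ + X)]big1 ?addr0; last first.
  by move=> m Hm; rewrite eq_sym (negbTE Hm) mul0r mul0r.
have := M4 (nth root acts l) => /(congr1 (fun t => t - x (nth root acts l))).
rewrite addrAC subrr add0r => E.
have -> : \sum_(u <- acts) prior_cov pa sigma0 (nth root acts l) u * x u =
   s * (prior_cov pa sigma0 (nth root acts l) a - x (nth root acts l)).
  by rewrite -E mulrC divfK ?s_neq0.
by rewrite mulrBr subrK pc_sym.
Qed.

Lemma pcE2 i j : prior_cov pa sigma0 i j = \sum_k q k * ((ancb pa k i)%:R * (ancb pa k j)%:R).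
Proof.
rewrite /prior_cov big_mkcond /=; apply: eq_bigr => k _.
by case: (ancb pa k i); case: (ancb pa k j); rewrite ?mulr1 ?mulr0 ?mul0r.
Qed.

Lemma Sg_unit : Sg \in unitmx.
Proof.
rewrite unitmxE unitfE; apply/negP => /det0P [z Hz0 HzS].
have E0 : (z *m Sg *m z^T) 0 0 = 0 by rewrite HzS mul0mx mxE.
pose A k (l : 'I_(size acts)) := ((ancb pa k (nth root acts l))%:R : R).
have P1 : \sum_k q k * (\sum_(l < size acts) z 0 l * A k l) ^+ 2 =
  \sum_(l < size acts) \sum_(m < size acts) z 0 m * prior_cov pa sigma0 (nth root acts m) (nth root acts l) * z 0 l.
  have -> : \sum_(l < size acts) \sum_(m < size acts) z 0 m * prior_cov pa sigma0 (nth root acts m) (nth root acts l) * z 0 l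
    = \sum_(l < size acts) \sum_(m < size acts) \sum_k z 0 m * (q k * (A k m * A k l)) * z 0 l.
    by apply: eq_bigr => l _; apply: eq_bigr => m _; rewrite pcE2 mulr_sumr mulr_suml.
  have -> : \sum_(l < size acts) \sum_(m < size acts) \sum_k z 0 m * (q k * (A k m * A k l)) * z 0 l
    = \sum_(l < size acts) \sum_k \sum_(m < size acts) z 0 m * (q k * (A k m * A k l)) * z 0 l.
    by apply: eq_bigr => l _; rewrite exchange_big.
  rewrite [RHS]exchange_big /=; apply: eq_bigr => k _.
  rewrite expr2 big_distrlr /= mulr_sumr; apply: eq_bigr => l _.
  rewrite mulr_sumr; apply: eq_bigr => m _; rewrite /A; ring.
have E1 : (z *m Sg *m z^T) 0 0 = \sum_k q k * (\sum_(l < size acts) z 0 l * A k l) ^+ 2 + s * \sum_(l < size acts) z 0 l ^+ 2.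
  rewrite P1 mxE mulr_sumr -big_split /=; apply: eq_bigr => l _.
  rewrite !mxE.
  have SgE : forall i j, Sg i j = prior_cov pa sigma0 (nth root acts i) (nth root acts j) + (i == j)%:R * s by move=> i j; rewrite /Sg /obs_cov mxE.
  rewrite mulr_suml (eq_bigr (fun m => z 0 m * prior_cov pa sigma0 (nth root acts m) (nth root acts l) * z 0 l + z 0 m * ((m == l)%:R * s) * z 0 l)); last by move=> m _; rewrite SgE mulrDr mulrDl.
  rewrite big_split /=; congr (_ + _).
  rewrite (bigD1 l) //= eqxx big1 ?addr0; last first.
    by move=> m Hm; rewrite (negbTE Hm) mul0r mulr0 mul0r.
  by rewrite mul1r expr2; ring.
have H1 : 0 <= \sum_k q k * (\sum_(l < size acts) z 0 l * A k l) ^+ 2.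
  by apply: sumr_ge0 => k _; rewrite mulr_ge0 ?sqr_ge0 ?ltW ?q_gt0.
have H2 : 0 <= \sum_(l < size acts) z 0 l ^+ 2 by apply: sumr_ge0 => l _; rewrite sqr_ge0.
have H3 : \sum_(l < size acts) z 0 l ^+ 2 = 0.
  apply/eqP; rewrite eq_le H2 andbT.
  have Hs' := s_gt0; rewrite E0 in E1.
  rewrite -(pmulr_rle0 _ Hs'); move: E1 H1; move: (\sum_(l < size acts) z 0 l ^+ 2) (\sum_k _) => S T E H1.
  by rewrite mulrC; lra.
move/negP: Hz0; apply; apply/eqP/matrixP => i l; rewrite ord1 mxE.
have := psumr_eq0P (fun l _ => sqr_ge0 (z 0 l)) H3 (i:=l) isT.
by move/eqP; rewrite sqrf_eq0 => /eqP.
Qed.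

Lemma post_var_x : post_var root pa sigma0 sigma acts a = x a.
Proof.
rewrite /post_var -/Sg -/kk.
have Hk : invmx Sg *m kk = s^-1 *: y.
  rewrite -[kk](scalerK s_neq0) -Sy -scalemxAr mulKmx //; exact: Sg_unit.
rewrite -mulmxA Hk -scalemxAr !mxE.
under eq_bigr => l _ do rewrite !mxE.
rewrite (sumnth (fun u => prior_cov pa sigma0 a u * x u)).
have := M4 a; rewrite mulrC => <-; by rewrite addrK.
Qed.

Lemma main : post_var root pa sigma0 sigma acts a =
  \sum_(i < size (path_from_root root pa a))
     (\prod_(i.+1 <= j < size (path_from_root root pa a))
        (hat_var root pa sigma0 sigma acts (nth root (path_from_root root pa a) j) ^+ 2
         / sigma0 (nth root (path_from_root root pa a) j) ^+ 4))
     * hat_var root pa sigma0 sigma acts (nth root (path_from_root root pa a) i).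
Proof. by rewrite post_var_x (x_on (ancb_refl Ht a)) beta_a mul1r. Qed.

End Model.


Local Open Scope ring_scope.

Theorem lemma2 (V : finType) (root : V) (pa : V -> V) (R : realFieldType)
    (sigma0 : V -> R) (sigma : R) (acts : seq V) (a : V) :
  is_rooted_tree root pa ->
  (forall i, 0 < sigma0 i) ->
  0 < sigma ->
  all (is_leaf root pa) acts ->
  is_leaf root pa a ->
  let psi := path_from_root root pa a in
  let L := size psi in
  post_var root pa sigma0 sigma acts a =
  \sum_(i < L)
     (\prod_(i.+1 <= j < L)
        (hat_var root pa sigma0 sigma acts (nth root psi j) ^+ 2
         / sigma0 (nth root psi j) ^+ 4))
     * hat_var root pa sigma0 sigma acts (nth root psi i).
Proof.
move=> Ht Hs0 Hs Hacts Ha psi L.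
exact: (main Ht Hs0 Hs Hacts Ha).
Qed.
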